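(* Let $G=(V,E)$ be a simple directed graph with at least one double edge, and let $T^u=p_{\mathrm{SEF}}T^u_{\mathrm{SEF}}+p_{\mathrm{DEM}}T^u_{\mathrm{DEM}}+p_{\mathrm{CP}}T^u_{\mathrm{CP}}+p_{\mathrm{CS}}T^u_{\mathrm{CS}}$ with $(p_{\mathrm{SEF}},p_{\mathrm{DEM}},p_{\mathrm{CP}},p_{\mathrm{CS}})$ a probability vector with positive entries. Then the Markov chain on the state space $\mathcal{G}_0^\infty(G)$ with transition matrix $T^u$ started at $G$ is ergodic (irreducible and aperiodic) and has the uniform distribution on $\mathcal{G}_0^\infty(G)$ as its equilibrium distribution.
   Context: A simple directed graph is $G=(V,E)$ with $V$ finite and $E\subseteq (V\times V)\setminus\{(v,v)\}$. $(i,j)\in E$ is a single edge if $(j,i)\notin E$; an ordered pair $(k,l)$ is a double edge if $(k,l),(l,k)\in E$. $\mathrm{pr}(V,E)=(V,\{\{u,v\}:(u,v)\in E\})$. $\mathcal{G}_0^\infty(G)$ is the set of simple directed graphs on $V$ with the same underlying undirected graph and the same number of directed edges as $G$. A clique is a vertex set in which every two distinct vertices are joined by an edge in some direction; maximal cliques depend only on $\mathrm{pr}(G)$. For a permutation $\pi$, $\pi((i,j))=(\pi(i),\pi(j))$. Moves: $\mathrm{SEF}_{i,j}(V,E)=(V,(E\setminus\{(i,j)\})\cup\{(j,i)\})$ for a single edge $(i,j)$; $\mathrm{DEM}^{k,l}_{i,j}(V,E)=(V,(E\setminus\{(k,l)\})\cup\{(j,i)\})$ for a single edge $(i,j)$ and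 double edge $(k,l)$; for a maximal clique $V_m$ with induced edges $E_m$ and a permutation $\pi$ of $V_m$, $\mathrm{CP}^\pi_m(V,E)=(V,(E\setminus E_m)\cup\pi(E_m))$; for equal-sized maximal cliques $V_1,V_2$ with induced edge sets $E_1,E_2$ and a permutation $\pi$ of $V_1\cup V_2$ with $\pi(V_1)=V_2,\pi(V_2)=V_1$, $\mathrm{CS}^\pi_{V_1,V_2}(V,E)=(V,(E\setminus(E_1\cup E_2))\cup\pi(E_1\cup E_2))$. Transition matrices: $T^u_{\mathrm{SEF}}(H,H')$ = probability that a uniformly drawn single edge $(i,j)$ of $H$ gives $\mathrm{SEF}_{i,j}(H)=H'$; $T^u_{\mathrm{DEM}}(H,H')$ = probability that a uniformly drawn single edge and an independently uniformly drawn double edge of $H$ give $\mathrm{DEM}^{k,l}_{i,j}(H)=H'$ (if a move has no eligible edges in $H$, it leaves $H$ unchanged). Fix a probability distribution $(p_d)$ on the sizes of maximal cliques of $\mathrm{pr}(G)$. $T^u_{\mathrm{CP}}(H,H')$ = probability that drawing $d\sim p_d$, then a maximal clique of size $d$ uniformly, then a permutation of it uniformly, yields $H'$ via CP; $T^u_{\mathrm{CS}}(H,H')$ = probability that drawing $d\sim p_d$, then two maximal cliques $V_1,V_2$ of size $d$ uniformly and independently, then $\pi$ uniformly among permutations of $V_1\cup V_2$ with $\pi(V_1)=V_2,\pi(V_2)=V_1$, yields $H'$ via CS. *)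

(* Defs.v *)
From HB Require Import structures.
From mathcomp Require Import all_boot all_order all_algebra all_fingroup.
Set Implicit Arguments. Unset Strict Implicit. Unset Printing Implicit Defensive.
Import Order.TTheory GRing.Theory Num.Theory.
Local Open Scope ring_scope.

(* A directed graph on a finite vertex type V is represented by its edge set
   E : {set V * V}; it is simple iff it has no loops. *)
Section Graphs.
Variable V : finType.
Notation edges := {set V * V}.

Definition loopless (E : edges) : bool := [forall v : V, (v, v) \notin E].

(* pr(V,E): the underlying undirected graph, as a set of unordered pairs. *)
Definition pr (E : edges) : {set {set V}} := [set [set e.1; e.2] | e in E].

Definition state_space (E : edges) : {set edges} :=
  [set E' : edges | [&& loopless E', pr E' == pr E & #|E'| == #|E|]].

Definition single_edges (E : edges) : edges := [set e in E | (e.2, e.1) \notin E].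
Definition double_edges (E : edges) : edges := [set e in E | (e.2, e.1) \in E].

Definition adj (E : edges) (u v : V) : bool :=
  (u != v) && (((u, v) \in E) || ((v, u) \in E)).
Definition is_clique (E : edges) (C : {set V}) : bool :=
  [forall u in C, forall v in C, (u != v) ==> adj E u v].
Definition is_max_clique (E : edges) (C : {set V}) : bool :=
  is_clique E C && [forall C' : {set V}, ((C \proper C') ==> ~~ is_clique E C')].
Definition max_cliques_of_size (E : edges) (d : nat) : {set {set V}} :=
  [set C : {set V} | is_max_clique E C && (#|C| == d)].
Definition is_max_clique_size (E : edges) (d : nat) : bool :=
  max_cliques_of_size E d != set0.

Definition SEF (e : V * V) (E : edges) : edges := (E :\ e) :|: [set (e.2, e.1)].
Definition DEM (e f : V * V) (E : edges) : edges := (E :\ f) :|: [set (e.2, e.1)].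
Definition induced (E : edges) (C : {set V}) : edges :=
  [set e in E | (e.1 \in C) && (e.2 \in C)].
Definition perm_edges (s : {perm V}) (A : edges) : edges :=
  [set (s e.1, s e.2) | e in A].
Definition CP (s : {perm V}) (C : {set V}) (E : edges) : edges :=
  (E :\: induced E C) :|: perm_edges s (induced E C).
Definition CS (s : {perm V}) (C1 C2 : {set V}) (E : edges) : edges :=
  (E :\: (induced E C1 :|: induced E C2))
    :|: perm_edges s (induced E C1 :|: induced E C2).

Definition perms_of (C : {set V}) : {set {perm V}} := [set s | perm_on C s].
Definition swap_perms (C1 C2 : {set V}) : {set {perm V}} :=
  [set s | [&& perm_on (C1 :|: C2) s, s @: C1 == C2 & s @: C2 == C1]].

Variable R : realFieldType.

Definition T_SEF (H H' : edges) : R :=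
  if single_edges H == set0 then (H == H')%:R
  else #|[set e in single_edges H | SEF e H == H']|%:R / #|single_edges H|%:R.

Definition T_DEM (H H' : edges) : R :=
  if (single_edges H == set0) || (double_edges H == set0) then (H == H')%:R
  else #|[set ef in setX (single_edges H) (double_edges H) | DEM ef.1 ef.2 H == H']|%:R
       / (#|single_edges H| * #|double_edges H|)%:R.

(* p : distribution on the sizes of maximal cliques *)
Definition T_CP (p : nat -> R) (H H' : edges) : R :=
  \sum_(d < #|V|.+1)
    p d * (\sum_(C in max_cliques_of_size H d)
            (#|max_cliques_of_size H d|%:R)^-1 *
            (#|[set s in perms_of C | CP s C H == H']|%:R / #|perms_of C|%:R)).

Definition T_CS (p : nat -> R) (H H' : edges) : R :=
  \sum_(d < #|V|.+1)
    p d * (\sum_(C1 in max_cliques_of_size H d) \sum_(C2 in max_cliques_of_size H d)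
            (#|max_cliques_of_size H d|%:R ^+ 2)^-1 *
            (#|[set s in swap_perms C1 C2 | CS s C1 C2 H == H']|%:R
               / #|swap_perms C1 C2|%:R)).

Definition T_u (pSEF pDEM pCP pCS : R) (p : nat -> R) (H H' : edges) : R :=
  pSEF * T_SEF H H' + pDEM * T_DEM H H' + pCP * T_CP p H H' + pCS * T_CS p H H'.

End Graphs.

Section Markov.
Variables (U : finType) (R : realFieldType) (S : {set U}) (T : U -> U -> R).

Fixpoint mpow (n : nat) (x y : U) : R :=
  match n with
  | 0 => (x == y)%:R
  | n'.+1 => \sum_(z in S) mpow n' x z * T z y
  end.

Definition irreducible : Prop :=
  forall x y, x \in S -> y \in S -> exists n, 0 < mpow n x y.

Definition aperiodic : Prop :=
  forall x, x \in S ->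
    forall d : nat, (forall n : nat, (0 < n)%N -> 0 < mpow n x x -> (d %| n)%N) -> d = 1%N.

Definition ergodic : Prop := irreducible /\ aperiodic.

Definition stationary (pi : U -> R) : Prop :=
  forall y, y \in S -> \sum_(x in S) pi x * T x y = pi y.

Definition uniform_on (x : U) : R := (#|S|%:R)^-1.
End Markov.

(* Main.v *)
Require Import Defs.
From HB Require Import structures.
From mathcomp Require Import all_boot all_order all_algebra all_fingroup.
From mathcomp Require Import zify lra.
Import Order.TTheory GRing.Theory Num.Theory.
Set Implicit Arguments. Unset Strict Implicit. Unset Printing Implicit Defensive.

Section G.
Variable V : finType.
Implicit Types (H E : {set V * V}) (e : V * V).

Definition erev e : V * V := (e.2, e.1).
Lemma erevK : involutive erev. Proof. by case. Qed.
Lemma erev_inj : injective erev. Proof. exact: inv_inj erevK. Qed.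

Lemma pairset_eq (a b c d : V) : [set a; b] = [set c; d] ->
  (a = c /\ b = d) \/ (a = d /\ b = c).
Proof.
move=> h.
have ha : a \in [set c; d] by rewrite -h set21.
have hb : b \in [set c; d] by rewrite -h set22.
have hc : c \in [set a; b] by rewrite h set21.
have hd : d \in [set a; b] by rewrite h set22.
case/set2P: ha hc hd => ->; case/set2P: hb => -> /set2P [] hc /set2P [] hd; subst; auto.
Qed.

Lemma pairC (a b : V) : [set a; b] = [set b; a].
Proof. by apply/setP => x; rewrite !inE orbC. Qed.

Lemma mem_pr H (u v : V) : ([set u; v] \in pr H) = ((u, v) \in H) || ((v, u) \in H).
Proof.
apply/imsetP/orP.
- case=> [[x y]] /= hxy /pairset_eq [[-> ->]|[-> ->]]; auto.
- case=> h; [exists (u, v) => // | exists (v, u) => //]; exact: pairC.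
Qed.

Lemma pr_eq H1 H2 :
  (forall e, e \in H1 -> (e \in H2) || (erev e \in H2)) ->
  (forall e, e \in H2 -> (e \in H1) || (erev e \in H1)) -> pr H1 = pr H2.
Proof.
have gen : forall A B : {set V * V}, (forall e, e \in A -> (e \in B) || (erev e \in B)) ->
    pr A \subset pr B.
  move=> A B h; apply/subsetP => P /imsetP [[x y] /h hx ->] /=.
  by rewrite mem_pr.
by move=> h1 h2; apply/eqP; rewrite eqEsubset !gen.
Qed.

Lemma pr_mem H1 H2 e : pr H1 = pr H2 -> e \in H1 -> (e \in H2) || (erev e \in H2).
Proof.
move=> h he; have : [set e.1; e.2] \in pr H1 by apply: imset_f.
by rewrite h mem_pr; case: e he.
Qed.

Lemma loopless_neq H e : loopless H -> e \in H -> e.1 != e.2.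
Proof.
move=> /forallP hl; case: e => u v he /=; apply/eqP => huv; subst.
by move: (hl v); rewrite he.
Qed.

End G.
Arguments erev {V}.


Section B.
Variable V : finType.
Implicit Types (H E : {set V * V}) (e : V * V).

Definition rk (v : V) : nat := enum_rank v.
Definition L : {set V * V} := [set e | (rk e.1 < rk e.2)%N].
Definition D1 H := double_edges H :&: L.
Definition D2 H := double_edges H :\: L.

Lemma rk_inj : injective rk.
Proof. by move=> u v /val_inj /enum_rank_inj. Qed.

Lemma in_doubles H e : (e \in double_edges H) = (e \in H) && (erev e \in H).
Proof. by rewrite inE. Qed.
Lemma in_singles H e : (e \in single_edges H) = (e \in H) && (erev e \notin H).
Proof. by rewrite inE. Qed.

Lemma card_singles H : #|single_edges H| + #|double_edges H| = #|H|.
Proof.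
rewrite -(cardsID (double_edges H) H) addnC; congr (_ + _).
  by apply: eq_card => e; rewrite !inE; case: (e \in H); rewrite //= ?andbT.
by apply: eq_card => e; rewrite !inE; case: (e \in H); rewrite //= ?andbT.
Qed.

Lemma revD1 H : loopless H -> D2 H = erev @: D1 H.
Proof.
move=> hl; apply/setP => -[u v]; apply/idP/imsetP.
- rewrite !inE /= => /andP [hL /andP [he hre]]; exists (v, u); last by [].
  rewrite !inE /= he hre /=.
  have hn := loopless_neq hl he.
  rewrite ltn_neqAle leqNgt hL andbT; apply/negP => /eqP /rk_inj h.
  by rewrite h eqxx in hn.
- case=> -[x y]; rewrite !inE /= => /andP [/andP [hf hrf] hL] [-> ->].
  rewrite hrf hf /=.
  by rewrite -leqNgt ltnW.
Qed.

Lemma card_doubles H : loopless H -> #|double_edges H| = (2 * #|D2 H|)%N.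
Proof.
move=> hl; rewrite -(cardsID L (double_edges H)) -/(D1 H) -/(D2 H).
by rewrite revD1 // card_imset; [rewrite mul2n addnn | exact: erev_inj].
Qed.

Lemma card_pr H : loopless H -> (#|pr H| + #|D2 H|)%N = #|H|.
Proof.
move=> hl.
have hsub : D2 H \subset H by apply/subsetP => e; rewrite !inE => /and3P [].
rewrite -(cardsID (D2 H) H) (setIidPr hsub) addnC; congr (_ + _).
have -> : pr H = [fun e => [set e.1; e.2]] @: (H :\: D2 H).
  apply/setP => P; apply/imsetP/imsetP.
  - case=> e he ->.
    case hD: (e \in D2 H); last by exists e => //; rewrite inE hD.
    have : e \in erev @: D1 H by rewrite -revD1.
    case/imsetP => -[x y] hf ->.
    exists (x, y); last by rewrite /= pairC.
    move: hf; rewrite !inE /= => /andP [/andP [hf hrf] hL]; rewrite hf /= andbT.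
    by rewrite hL.
  - by case=> e; rewrite inE => /andP [_ he] ->; exists e.
apply: card_in_imset => -[a b] [c d]; rewrite !inE /=.
move=> /andP [he1 he2] /andP [hf1 hf2] h.
case: (pairset_eq h) => [[-> ->]|[h1 h2]] //; subst.
move: he1 hf1; rewrite hf2 he2 /= !andbT !negbK => hL1 hL2.
by move: hL1; rewrite ltnNge (ltnW hL2).
Qed.

End B.


Section C.
Variable V : finType.
Implicit Types (H E : {set V * V}) (e : V * V).

Lemma inS E H : (H \in state_space E) = [&& loopless H, pr H == pr E & #|H| == #|E|].
Proof. by rewrite inE. Qed.

Lemma S_inv E H : loopless E -> H \in state_space E ->
  #|single_edges H| = #|single_edges E| /\ #|double_edges H| = #|double_edges E|.
Proof.
move=> hlE; rewrite inS => /and3P [hl /eqP hpr /eqP hc].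
have h1 := card_pr hl; have h2 := card_pr hlE.
have h3 := card_doubles hl; have h4 := card_doubles hlE.
have h5 := card_singles H; have h6 := card_singles E.
rewrite hpr hc in h1; lia.
Qed.

Lemma adjS E H u v : H \in state_space E -> adj H u v = adj E u v.
Proof.
rewrite inS => /and3P [_ /eqP hpr _].
by rewrite /adj -!mem_pr hpr.
Qed.

Lemma mcS E H d : H \in state_space E ->
  max_cliques_of_size H d = max_cliques_of_size E d.
Proof.
move=> hS.
have hc : forall C, is_clique H C = is_clique E C.
  move=> C; apply: eq_forallb => u; congr (_ ==> _); apply: eq_forallb => v.
  by rewrite (adjS _ _ hS).
apply/setP => C; rewrite !inE /is_max_clique hc; congr (_ && _ && _).
by apply: eq_forallb => C'; rewrite hc.
Qed.

Lemma replace_inS E H a c : H \in state_space E -> a \in H -> c \notin H ->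
  erev c \in H -> erev a \in (H :\ a) :|: [set c] ->
  (H :\ a) :|: [set c] \in state_space E.
Proof.
rewrite !inS => /and3P [hl /eqP hpr /eqP hc] ha hcn hrc hra.
apply/and3P; split.
- apply/forallP => v; rewrite !inE negb_or negb_and.
  have := (forallP hl v); move=> hv; rewrite hv orbT /=.
  by apply/eqP => hcv; move: hrc; rewrite -hcv /= (negbTE hv).
- rewrite -hpr; apply/eqP; apply: pr_eq => e.
  + rewrite !inE => /orP [/andP [_ ->] //|/eqP ->]; by rewrite hrc orbT.
  + move=> he; case hea: (e == a); first by move/eqP: hea => ->; rewrite hra orbT.
    by rewrite !inE he hea.
- apply/eqP; rewrite setUC cardsU1 !inE negb_and hcn orbT /= -hc.
  by rewrite (cardsD1 a H) ha.
Qed.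

Lemma SEF_inS E H e : H \in state_space E -> e \in single_edges H ->
  SEF e H \in state_space E.
Proof.
move=> hS; rewrite in_singles => /andP [he hre].
apply: replace_inS => //; first by rewrite erevK.
by rewrite !inE eqxx orbT.
Qed.

Lemma DEM_inS E H e f : H \in state_space E -> e \in single_edges H ->
  f \in double_edges H -> DEM e f H \in state_space E.
Proof.
move=> hS; rewrite in_singles in_doubles => /andP [he hre] /andP [hf hrf].
have hl : loopless H by move: hS; rewrite inS => /and3P [].
apply: replace_inS => //; first by rewrite erevK.
rewrite !inE hrf andbT; apply/orP; left.
by have := loopless_neq hl hf; case: f {hf hrf} => u v /=; apply: contra => /eqP [->].
Qed.

Lemma SEF_sym H e : e \in single_edges H ->
  erev e \in single_edges (SEF e H) /\ SEF (erev e) (SEF e H) = H.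
Proof.
rewrite in_singles => /andP [he hre].
have hne : erev e != e by apply: contraNneq hre => ->.
split.
  by rewrite in_singles erevK !inE -/(erev e) eqxx orbT /= eqxx /= eq_sym (negbTE hne).
apply/setP => x; rewrite /SEF !inE -/(erev e) -/(erev (erev e)) erevK.
case hxe: (x == e); first by move/eqP: hxe => ->; rewrite he orbT.
case hx: (x == erev e) => //=; first by move/eqP: hx => ->; rewrite (negbTE hre).
by rewrite !orbF.
Qed.

Lemma DEM_sym H e f : loopless H -> e \in single_edges H -> f \in double_edges H ->
  [/\ erev f \in single_edges (DEM e f H), erev e \in double_edges (DEM e f H)
    & DEM (erev f) (erev e) (DEM e f H) = H].
Proof.
move=> hl hes hfd; move: hes; rewrite (in_singles H e) => /andP [he hre]; move: hfd; rewrite (in_doubles H f) => /andP [hf hrf].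
have hff : erev f != f.
  by have := loopless_neq hl hf; case: f {hf hrf} => u v /=; apply: contra => /eqP [->].
have hfe : f != erev e by apply: contraNneq hre => <-.
have hef : e != f by apply: contraNneq hre => ->.
rewrite /DEM -!/(erev _); split.
- by rewrite in_singles erevK !inE hff hrf /= eqxx /= (negbTE hfe).
- by rewrite !inE -/(erev (erev e)) erevK eqxx orbT /= hef he.
apply/setP => x; rewrite !inE.
case: (x =P f) => [->|hxf] /=; first by rewrite hf erevK eqxx orbT.
rewrite erevK; move/eqP/negbTE: hxf => ->; rewrite orbF.
case hx: (x == erev e) => /=; last by rewrite orbF.
by move/eqP: hx => ->; rewrite (negbTE hre).
Qed.

End C.


Section D.
Variable V : finType.
Implicit Types (H E : {set V * V}) (e : V * V) (s : {perm V}).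

Definition ps s e : V * V := (s e.1, s e.2).
Definition Op (P : pred (V * V)) s H : {set V * V} :=
  (H :\: [set e in H | P e]) :|: [set ps s e | e in [set e in H | P e]].

Lemma psK s : cancel (ps s) (ps s^-1).
Proof. by case=> u v; rewrite /ps /= !permK. Qed.
Lemma ps_inj s : injective (ps s).
Proof. exact: can_inj (@psK s). Qed.

Section OpP.
Variables (P : pred (V * V)) (s : {perm V}).
Hypothesis hP1 : forall e, P e -> P (ps s e).
Hypothesis hP2 : forall e, P e -> P (ps s^-1 e).

Lemma Op_A H : [set e in Op P s H | P e] = [set ps s e | e in [set e in H | P e]].
Proof.
apply/setP => x; rewrite !inE; apply/idP/idP.
- case/andP => /orP [/andP [hn hx] hPx | -> //].
  by rewrite hx hPx in hn.
- move=> hx; rewrite hx orbT /=.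
  by case/imsetP: hx => y; rewrite inE => /andP [_ /hP1 hy] ->.
Qed.

Lemma Op_sym H H' : Op P s H = H' -> Op P s^-1 H' = H.
Proof.
move=> <-; rewrite [Op P s^-1 _]/Op Op_A.
have -> : Op P s H :\: [set ps s e | e in [set e in H | P e]] = H :\: [set e in H | P e].
  apply/setP => x; rewrite /Op !inE.
  case hx: (x \in [set ps s e | e in [set e in H | P e]]) => /=.
    case/imsetP: hx => y; rewrite inE => /andP [_ /hP1 hy] ->.
    by rewrite hy andbT; case: (ps s y \in H).
  by rewrite orbF.
rewrite -imset_comp.
have -> : [set (ps s^-1 \o ps s) x | x in [set e in H | P e]] = [set e in H | P e].
  by rewrite (eq_imset _ (psK s)) imset_id.
by apply/setP => x; rewrite !inE; case: (x \in H); case: (P x).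
Qed.

Lemma Op_inS E H : H \in state_space E ->
  (forall e, P e -> P (erev e)) ->
  (forall u v, u != v -> P (u, v) -> ((u, v) \in H) || ((v, u) \in H)) ->
  Op P s H \in state_space E.
Proof.
rewrite !inS => /and3P [hl /eqP hpr /eqP hc] hsym hcl.
have hdisj : [disjoint H :\: [set e in H | P e] & [set ps s e | e in [set e in H | P e]]].
  rewrite disjoint_sym disjoints_subset; apply/subsetP => x /imsetP [y]; rewrite inE => /andP [_ /hP1 hy] ->.
  by rewrite !inE hy /= andbT negb_and negbK; case: (ps s y \in H).
apply/and3P; split.
- apply/forallP => v; rewrite /Op !inE negb_or; apply/andP; split.
    by rewrite negb_and (forallP hl v) orbT.
  apply/imsetP => -[[a b]]; rewrite inE => /andP [hab _] [h1 h2].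
  have := loopless_neq hl hab; rewrite /= -(inj_eq (@perm_inj _ s)).
  by rewrite -h1 -h2 eqxx.
- rewrite -hpr; apply/eqP; apply: pr_eq => x.
  + rewrite /Op !inE => /orP [/andP [_ ->] //|/imsetP [[a b]]].
    rewrite inE => /andP [hab hPab] ->.
    have hne : s a != s b by rewrite (inj_eq (@perm_inj _ s)); exact: (loopless_neq hl hab).
    exact: (hcl _ _ hne (hP1 hPab)).
  + move=> hx; case hPx: (P x); last by rewrite /Op !inE hx hPx.
    have hy : P (ps s^-1 x) by exact: hP2.
    have hne : (ps s^-1 x).1 != (ps s^-1 x).2.
      by rewrite /= (inj_eq (@perm_inj _ s^-1)); exact: (loopless_neq hl hx).
    have hx' : x = ps s (ps s^-1 x) by case: (x) => u v; rewrite /ps /= !permKV.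
    move: hy hne hx'; case: (ps s^-1 x) => a b hab hne hx'.
    case/orP: (hcl _ _ hne hab) => hin.
    * by rewrite /Op !inE; apply/orP; left; apply/orP; right; apply/imsetP; exists (a, b); rewrite ?inE ?hin.
    * apply/orP; right; rewrite /Op !inE; apply/orP; right; apply/imsetP; exists (b, a).
        by rewrite inE hin /=; exact: (hsym _ hab).
      by rewrite hx'.
- apply/eqP; rewrite -hc /Op (cardsU _ _) (disjoint_setI0 hdisj) cards0 subn0.
  rewrite card_imset; last exact: ps_inj.
  by rewrite -(cardsID [set e in H | P e] H) addnC; congr (_ + _); apply: eq_card => x; rewrite !inE; case: (x \in H).
Qed.

End OpP.
End D.


Section E.
Variable V : finType.
Implicit Types (H E : {set V * V}) (e : V * V) (s : {perm V}) (C : {set V}).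

Definition PC C : pred (V * V) := fun e => (e.1 \in C) && (e.2 \in C).
Definition PS C1 C2 : pred (V * V) := fun e => PC C1 e || PC C2 e.

Lemma CP_Op s C H : CP s C H = Op (PC C) s H.
Proof. by []. Qed.

Lemma CS_Op s C1 C2 H : CS s C1 C2 H = Op (PS C1 C2) s H.
Proof.
rewrite /CS /Op.
have -> : induced H C1 :|: induced H C2 = [set e in H | PS C1 C2 e].
  by apply/setP => x; rewrite !inE /PS /PC; case: (x \in H).
by [].
Qed.

Lemma clique_adj H C u v : is_clique H C -> u != v -> PC C (u, v) ->
  ((u, v) \in H) || ((v, u) \in H).
Proof.
move=> /forallP hc huv /andP [/= hu hv].
by move: (hc u); rewrite hu /= => /forallP /(_ v); rewrite hv huv /= => /andP [].
Qed.

Lemma max_clique_clique H C : is_max_clique H C -> is_clique H C.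
Proof. by case/andP. Qed.

Lemma PC_perm C s e : perm_on C s -> PC C e -> PC C (ps s e).
Proof. by move=> hs; rewrite /PC /= !(perm_closed _ hs). Qed.

Lemma CP_inS E H C s : H \in state_space E -> is_clique H C -> perm_on C s ->
  CP s C H \in state_space E.
Proof.
move=> hS hc hs; rewrite CP_Op; apply: Op_inS => //.
- by move=> e; apply: PC_perm.
- by move=> e; apply: PC_perm; apply: perm_onV.
- by move=> [u v]; rewrite /PC /= andbC.
- by move=> u v; apply: clique_adj.
Qed.

Lemma CP_sym H H' C s : perm_on C s -> CP s C H = H' -> CP s^-1 C H' = H.
Proof.
move=> hs; rewrite !CP_Op; apply: Op_sym.
- by move=> e; apply: PC_perm.
Qed.

Lemma swap_in C1 C2 s x : s \in swap_perms C1 C2 ->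
  ((x \in C1) -> s x \in C2) /\ ((x \in C2) -> s x \in C1).
Proof.
rewrite inE => /and3P [_ /eqP h1 /eqP h2]; split => hx.
  by rewrite -h1; apply: imset_f.
by rewrite -h2; apply: imset_f.
Qed.

Lemma swap_inv C1 C2 s : s \in swap_perms C1 C2 -> (s^-1)%g \in swap_perms C1 C2.
Proof.
move=> hs; move: (hs); rewrite !inE => /and3P [hp /eqP h1 /eqP h2].
have e1 : (s^-1)%g @: C1 = C2 by rewrite -h2 -imset_comp (eq_imset _ (permK s)) imset_id.
have e2 : (s^-1)%g @: C2 = C1 by rewrite -h1 -imset_comp (eq_imset _ (permK s)) imset_id.
by rewrite perm_onV //= e1 e2 !eqxx.
Qed.

Lemma PS_perm C1 C2 s e : s \in swap_perms C1 C2 -> PS C1 C2 e -> PS C1 C2 (ps s e).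
Proof.
move=> hs; rewrite /PS /PC /= => /orP [] /andP [h1 h2].
  by rewrite (proj1 (swap_in e.1 hs) h1) (proj1 (swap_in e.2 hs) h2) orbT.
by rewrite (proj2 (swap_in e.1 hs) h1) (proj2 (swap_in e.2 hs) h2).
Qed.

Lemma CS_inS E H C1 C2 s : H \in state_space E -> is_clique H C1 -> is_clique H C2 ->
  s \in swap_perms C1 C2 -> CS s C1 C2 H \in state_space E.
Proof.
move=> hS hc1 hc2 hs; rewrite CS_Op; apply: Op_inS => //.
- by move=> e; apply: PS_perm.
- by move=> e; apply: PS_perm; apply: swap_inv.
- by move=> [u v]; rewrite /PS /PC /= (andbC (v \in C1)) (andbC (v \in C2)).
- move=> u v huv /orP [] h; [exact: (clique_adj hc1)| exact: (clique_adj hc2)].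
Qed.

Lemma CS_sym H H' C1 C2 s : s \in swap_perms C1 C2 -> CS s C1 C2 H = H' ->
  CS s^-1 C1 C2 H' = H.
Proof.
move=> hs; rewrite !CS_Op; apply: Op_sym.
by move=> e; apply: PS_perm.
Qed.

Lemma swap_exists_gen n : forall X Y : {set V}, #|X| = n -> #|Y| = n -> [disjoint X & Y] ->
  exists s : {perm V}, [/\ forall z, z \in X -> s z \in Y, forall z, z \in Y -> s z \in X
     & forall z, z \notin X -> z \notin Y -> s z = z].
Proof.
elim: n => [|n IH] X Y hX hY hd.
  exists 1%g; split => z; rewrite ?perm1 //.
  - by move/eqP: hX; rewrite cards_eq0 => /eqP ->; rewrite inE.
  - by move/eqP: hY; rewrite cards_eq0 => /eqP ->; rewrite inE.
have : (0 < #|X|)%N by rewrite hX.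
case/card_gt0P => x hx.
have : (0 < #|Y|)%N by rewrite hY.
case/card_gt0P => y hy.
have hxy : x != y by apply: contraTneq hx => ->; move: hd; rewrite disjoint_sym => /disjointFr ->.
have hyX : y \notin X by move: hd; rewrite disjoint_sym => /disjointFr ->.
have hxY : x \notin Y by move: hd => /disjointFr ->.
have [s' [h1 h2 h3]] : exists s : {perm V}, [/\ forall z, z \in X :\ x -> s z \in Y :\ y,
    forall z, z \in Y :\ y -> s z \in X :\ x
     & forall z, z \notin X :\ x -> z \notin Y :\ y -> s z = z].
  apply: IH.
  - by move: hX; rewrite (cardsD1 x X) hx add1n => -[].
  - by move: hY; rewrite (cardsD1 y Y) hy add1n => -[].
  - apply: disjointWl (subD1set X x) _; apply: disjointWr (subD1set Y y) _; exact: hd.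
have fx : s' x = x by apply: h3; rewrite !inE ?eqxx ?(negbTE hxY) ?andbF.
have fy : s' y = y by apply: h3; rewrite !inE ?eqxx ?(negbTE hyX) ?andbF.
exists (tperm x y * s')%g; split => z hz; rewrite permM.
- case: (z =P x) => [->|hzx]; first by rewrite tpermL fy.
  have hzy : z != y by apply: contraTneq hz => ->.
  rewrite tpermD; [|by apply/eqP => h; apply: hzx|by rewrite eq_sym].
  by have := h1 z; rewrite !inE hz andbT => /(_ (introN eqP hzx)) /andP [].
- case: (z =P y) => [->|hzy]; first by rewrite tpermR fx.
  have hzx : z != x by apply: contraTneq hz => ->.
  rewrite tpermD; [|by rewrite eq_sym|by apply/eqP => h; apply: hzy].
  by have := h2 z; rewrite !inE hz andbT => /(_ (introN eqP hzy)) /andP [].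
- move=> hzY.
  have hzx : x != z by apply: contraNneq hz => <-.
  have hzy : y != z by apply: contraNneq hzY => <-.
  by rewrite tpermD // h3 // !inE negb_and ?hz ?hzY orbT.
Qed.

Lemma swap_exists C1 C2 : #|C1| = #|C2| -> exists s, s \in swap_perms C1 C2.
Proof.
move=> hc.
have hX : #|C1 :\: C2| = #|C2 :\: C1|.
  have := cardsID C2 C1; have := cardsID C1 C2; rewrite setIC; lia.
have hd : [disjoint C1 :\: C2 & C2 :\: C1].
  rewrite -setI_eq0; apply/eqP/setP => z; rewrite !inE.
  by case: (z \in C1); case: (z \in C2).
have [s [h1 h2 h3]] := swap_exists_gen hX (erefl _) hd.
have hi : forall A B : {set V}, (forall z, z \in A -> s z \in B) -> #|A| = #|B| -> s @: A == B.
  move=> A B hAB hcard; rewrite eqEcard card_imset ?hcard ?leqnn ?andbT; last exact: perm_inj.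
  by apply/subsetP => w /imsetP [z hz ->]; apply: hAB.
exists s; rewrite inE; apply/and3P; split.
- apply/subsetP => z; rewrite !inE; apply: contraR; rewrite negb_or => /andP [hz1 hz2].
  by rewrite h3 ?eqxx // !inE ?(negbTE hz1) ?(negbTE hz2) ?andbF.
- apply: hi => // z hz; case hz2: (z \in C2).
    by rewrite h3 // !inE ?hz ?hz2.
  by have := h1 z; rewrite !inE hz hz2 => /(_ isT) /andP [].
- apply: hi => // z hz; case hz1: (z \in C1).
    by rewrite h3 // !inE ?hz ?hz1.
  by have := h2 z; rewrite !inE hz hz1 => /(_ isT) /andP [].
Qed.

End E.


Lemma count_fiber (I U : finType) (D : {set I}) (S : {set U}) (f : I -> U) :
  (forall i, i \in D -> f i \in S) ->
  (\sum_(y in S) #|[set i in D | f i == y]|)%N = #|D|.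
Proof.
move=> hf.
transitivity (\sum_(y in S) \sum_(i in D) (f i == y : nat))%N.
  apply: eq_bigr => y _; rewrite -sum1_card [LHS]big_mkcond [RHS]big_mkcond /=.
  by apply: eq_bigr => i _; rewrite inE; case: (i \in D); case: (f i == y).
rewrite exchange_big /= -sum1_card; apply: eq_bigr => i hi.
rewrite (bigD1 (f i)) ?hf //= eqxx big1 // => y /andP [_ hy].
by rewrite eq_sym (negbTE hy).
Qed.

Section F.
Local Open Scope ring_scope.
Variable R : realFieldType.

Lemma sum_frac (U I : finType) (S : {set U}) (D : {set I}) (f : I -> U) :
  (forall i, i \in D -> f i \in S) -> #|D| != 0%N ->
  \sum_(y in S) (#|[set i in D | f i == y]|%:R / #|D|%:R) = 1 :> R.
Proof.
move=> hf hD; rewrite -mulr_suml -natr_sum count_fiber // mulfV //.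
by rewrite pnatr_eq0.
Qed.

Lemma sum_delta (U : finType) (S : {set U}) x : x \in S ->
  \sum_(y in S) ((x == y)%:R : R) = 1.
Proof.
move=> hx; rewrite (bigD1 x) //= eqxx big1 ?addr0 // => y /andP [_ hy].
by rewrite eq_sym (negbTE hy).
Qed.

Lemma card_sym (U T : finType) (A : U -> U -> {set T}) (g : T -> T) (P : pred U) :
  injective g ->
  (forall x y t, P x -> P y -> t \in A x y -> g t \in A y x) ->
  forall x y, P x -> P y -> #|A x y| = #|A y x|.
Proof.
move=> hg hA.
have le : forall x y, P x -> P y -> (#|A x y| <= #|A y x|)%N.
  move=> x y hx hy; rewrite -(card_imset _ hg); apply: subset_leq_card.
  by apply/subsetP => t /imsetP [u hu ->]; apply: hA.
by move=> x y hx hy; apply/eqP; rewrite eqn_leq !le.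
Qed.

End F.



Local Open Scope ring_scope.

Section G.
Variable R : realFieldType.
Variable V : finType.
Variable E : {set V * V}.
Hypothesis hlE : loopless E.
Local Notation S := (state_space E).
Implicit Types (H : {set V * V}).

Lemma sum_pos (I : finType) (P : pred I) (F : I -> R) i0 :
  (forall i, P i -> 0 <= F i) -> P i0 -> 0 < F i0 -> 0 < \sum_(i | P i) F i.
Proof.
move=> h0 hi0 hF; rewrite (bigD1 i0) //=; apply: ltr_wpDr => //.
by apply: sumr_ge0 => i /andP [hi _]; apply: h0.
Qed.

Lemma sum_inv (U : finType) (M : {set U}) :
  \sum_(C in M) (#|M|%:R^-1 : R) = (M != set0)%:R.
Proof.
rewrite sumr_const -(mulr_natr (#|M|%:R^-1)); case: (M =P set0) => [->|hM]; first by rewrite cards0 mulr0.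
by rewrite mulVf // pnatr_eq0 cards_eq0; apply/eqP.
Qed.

Lemma sum_inv2 (U : finType) (M : {set U}) :
  \sum_(C1 in M) \sum_(C2 in M) ((#|M|%:R ^+ 2)^-1 : R) = (M != set0)%:R.
Proof.
rewrite (eq_bigr (fun _ => #|M|%:R^-1)); first exact: sum_inv.
move=> C1 _; rewrite sumr_const -(mulr_natr ((#|M|%:R ^+ 2)^-1)); case: (M =P set0) => [->|hM].
  by rewrite cards0 !mulr0 invr0.
by rewrite -exprVn expr2 -mulrA mulVf ?mulr1 // pnatr_eq0 cards_eq0; apply/eqP.
Qed.

Lemma T_SEF_ge0 H H' : 0 <= T_SEF R H H'.
Proof. by rewrite /T_SEF; case: ifP => _; [exact: ler0n | exact: divr_ge0]. Qed.

Lemma T_SEF_row H : H \in S -> \sum_(H' in S) T_SEF R H H' = 1.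
Proof.
move=> hS; rewrite /T_SEF; case h0: (single_edges H == set0); first exact: sum_delta.
apply: sum_frac; first by move=> e he; apply: SEF_inS.
by rewrite cards_eq0 h0.
Qed.

Lemma singles_eq H H' : H \in S -> H' \in S -> #|single_edges H| = #|single_edges H'|.
Proof. by move=> h1 h2; rewrite (proj1 (S_inv hlE h1)) (proj1 (S_inv hlE h2)). Qed.
Lemma doubles_eq H H' : H \in S -> H' \in S -> #|double_edges H| = #|double_edges H'|.
Proof. by move=> h1 h2; rewrite (proj2 (S_inv hlE h1)) (proj2 (S_inv hlE h2)). Qed.

Lemma T_SEF_sym H H' : H \in S -> H' \in S -> T_SEF R H H' = T_SEF R H' H.
Proof.
move=> h1 h2; rewrite /T_SEF -!cards_eq0 (singles_eq h1 h2).
case: (_ == 0%N); first by rewrite eq_sym.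
congr (_%:R / _).
apply: (@card_sym _ _ (fun x y => [set e in single_edges x | SEF e x == y]) erev predT) => //.
  exact: erev_inj.
move=> x y t _ _; rewrite inE => /andP [ht /eqP <-].
by have [h3 h4] := SEF_sym ht; rewrite inE h3 h4 eqxx.
Qed.

Lemma T_DEM_ge0 H H' : 0 <= T_DEM R H H'.
Proof. by rewrite /T_DEM; case: ifP => _; [exact: ler0n | exact: divr_ge0]. Qed.

Lemma T_DEM_row H : H \in S -> \sum_(H' in S) T_DEM R H H' = 1.
Proof.
move=> hS; rewrite /T_DEM; case h0: (_ || _); first exact: sum_delta.
rewrite -cardsX; apply: sum_frac.
  by move=> [e f]; rewrite in_setX /= => /andP [he hf]; apply: DEM_inS.
by rewrite cardsX muln_eq0 !cards_eq0 h0.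
Qed.

Definition gDEM (ef : (V * V) * (V * V)) := (erev ef.2, erev ef.1).
Lemma gDEM_inj : injective gDEM.
Proof. by apply: (inv_inj (f:=gDEM)) => -[a b]; rewrite /gDEM /= !erevK. Qed.

Lemma T_DEM_sym H H' : H \in S -> H' \in S -> T_DEM R H H' = T_DEM R H' H.
Proof.
move=> h1 h2; rewrite /T_DEM -!cards_eq0 (singles_eq h1 h2) (doubles_eq h1 h2).
case: (_ || _); first by rewrite eq_sym.
congr (_%:R / _).
apply: (@card_sym _ _ (fun x y => [set ef in setX (single_edges x) (double_edges x) | DEM ef.1 ef.2 x == y]) gDEM (fun x => x \in S)) => //.
  exact: gDEM_inj.
move=> x y [e f] hx _; rewrite inE in_setX /= => /andP [/andP [he hf] /eqP <-].
have hl : loopless x by move: hx; rewrite inS => /and3P [].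
have [a b c] := DEM_sym hl he hf.
by rewrite inE in_setX /= a b c eqxx.
Qed.

Variable p : nat -> R.
Hypothesis hp : forall d, 0 <= p d.

Lemma T_CP_ge0 H H' : 0 <= T_CP p H H'.
Proof.
apply: sumr_ge0 => d _; apply: mulr_ge0 => //; apply: sumr_ge0 => C _.
by apply: mulr_ge0; [rewrite invr_ge0 | apply: divr_ge0].
Qed.

Lemma T_CS_ge0 H H' : 0 <= T_CS p H H'.
Proof.
apply: sumr_ge0 => d _; apply: mulr_ge0 => //; apply: sumr_ge0 => C1 _.
apply: sumr_ge0 => C2 _.
by apply: mulr_ge0; [rewrite invr_ge0 exprn_ge0 | apply: divr_ge0].
Qed.

Lemma mc_clique H d C : C \in max_cliques_of_size H d -> is_clique H C.
Proof. by rewrite inE => /andP [/max_clique_clique]. Qed.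

Lemma mc_card H d C : C \in max_cliques_of_size H d -> #|C| = d.
Proof. by rewrite inE => /andP [_ /eqP]. Qed.

Lemma T_CP_row H : H \in S -> \sum_(H' in S) T_CP p H H' =
  \sum_(d < #|V|.+1) p d * (max_cliques_of_size H d != set0)%:R.
Proof.
move=> hS; rewrite /T_CP exchange_big /=; apply: eq_bigr => d _.
rewrite -mulr_sumr; congr (_ * _).
rewrite exchange_big /= -sum_inv; apply: eq_bigr => C hC.
rewrite -mulr_sumr sum_frac ?mulr1 //.
  by move=> s; rewrite inE => hs; apply: CP_inS hS (mc_clique hC) hs.
by rewrite cards_eq0; apply/set0Pn; exists 1%g; rewrite inE perm_on1.
Qed.

Lemma T_CS_row H : H \in S -> \sum_(H' in S) T_CS p H H' =
  \sum_(d < #|V|.+1) p d * (max_cliques_of_size H d != set0)%:R.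
Proof.
move=> hS; rewrite /T_CS exchange_big /=; apply: eq_bigr => d _.
rewrite -mulr_sumr; congr (_ * _).
rewrite exchange_big /= -sum_inv2; apply: eq_bigr => C1 hC1.
rewrite exchange_big /=; apply: eq_bigr => C2 hC2.
rewrite -mulr_sumr sum_frac ?mulr1 //.
  by move=> s hs; apply: CS_inS hS (mc_clique hC1) (mc_clique hC2) hs.
rewrite cards_eq0; apply/set0Pn.
by have [s hs] := swap_exists (etrans (mc_card hC1) (esym (mc_card hC2))); exists s.
Qed.

Lemma T_CP_sym H H' : H \in S -> H' \in S -> T_CP p H H' = T_CP p H' H.
Proof.
move=> h1 h2; rewrite /T_CP; apply: eq_bigr => d _.
rewrite (mcS d h1) (mcS d h2); congr (_ * _); apply: eq_bigr => C _.
congr (_ * (_%:R / _)).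
apply: (@card_sym _ _ (fun x y => [set s in perms_of C | CP s C x == y]) invg predT) => //.
  exact: invg_inj.
move=> x y s _ _; rewrite !inE => /andP [hs /eqP hxy].
by rewrite perm_onV //= (CP_sym hs hxy) eqxx.
Qed.

Lemma T_CS_sym H H' : H \in S -> H' \in S -> T_CS p H H' = T_CS p H' H.
Proof.
move=> h1 h2; rewrite /T_CS; apply: eq_bigr => d _.
rewrite (mcS d h1) (mcS d h2); congr (_ * _); apply: eq_bigr => C1 _.
apply: eq_bigr => C2 _.
congr (_ * (_%:R / _)).
apply: (@card_sym _ _ (fun x y => [set s in swap_perms C1 C2 | CS s C1 C2 x == y]) invg predT) => //.
  exact: invg_inj.
move=> x y s _ _; rewrite [s \in _]inE => /andP [hs /eqP hxy].
rewrite inE (swap_inv hs) /=.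
by rewrite (CS_sym hs hxy) eqxx.
Qed.

Lemma CP1 C H : CP 1%g C H = H.
Proof.
rewrite CP_Op /Op.
have -> : [set ps 1%g e | e in [set e in H | PC C e]] = [set e in H | PC C e].
  by rewrite (@eq_imset _ _ _ id) ?imset_id // => -[u v]; rewrite /ps /= !perm1.
by apply/setP => x; rewrite !inE; case: (x \in H); case: (PC C x).
Qed.

Lemma T_CP_self H : H \in S ->
  (exists d : 'I_#|V|.+1, 0 < p d /\ max_cliques_of_size H d != set0) ->
  0 < T_CP p H H.
Proof.
move=> hS [d [hpd hM]]; rewrite /T_CP; apply: (@sum_pos _ _ _ d) => //.
  move=> i _; apply: mulr_ge0 => //; apply: sumr_ge0 => C _.
  by apply: mulr_ge0; [rewrite invr_ge0 | apply: divr_ge0].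
apply: mulr_gt0 => //.
case/set0Pn: (hM) => C hC; apply: (@sum_pos _ _ _ C) => //.
  by move=> C' _; apply: mulr_ge0; [rewrite invr_ge0 | apply: divr_ge0].
apply: mulr_gt0; first by rewrite invr_gt0 ltr0n card_gt0.
have h1 : (1%g : {perm V}) \in perms_of C by rewrite inE perm_on1.
apply: divr_gt0; rewrite ltr0n; apply/card_gt0P; first by exists 1%g; rewrite inE h1 CP1 eqxx.
by exists 1%g.
Qed.

End G.


Lemma card_dec (V : finType) (H H' : {set V * V}) a c :
  a \in H -> a \notin H' -> c \in H' ->
  (#|((H :\ a) :|: [set c]) :\: H'| < #|H :\: H'|)%N.
Proof.
move=> ha haH hc.
have hs : ((H :\ a) :|: [set c]) :\: H' \subset (H :\: H') :\ a.
  apply/subsetP => x; rewrite !inE => /andP [hx /orP [/andP [hxa hxH]|/eqP hxc]].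
    by rewrite hx hxa hxH.
  by rewrite hxc hc in hx.
apply: (leq_ltn_trans (subset_leq_card hs)).
by rewrite [X in (_ < X)%N](cardsD1 a) !inE ha haH.
Qed.

Section Main.
Variable R : realFieldType.
Variable V : finType.
Variable E : {set V * V}.
Hypothesis hlE : loopless E.
Variables (pSEF pDEM pCP pCS : R) (p : nat -> R).
Hypotheses (hSEF : 0 < pSEF) (hDEM : 0 < pDEM) (hCP : 0 < pCP) (hCS : 0 < pCS).
Hypothesis hp0 : forall d, 0 <= p d.
Local Notation S := (state_space E).
Implicit Types (H : {set V * V}).
Local Notation T := (@T_u V R pSEF pDEM pCP pCS p).

Lemma T_terms H H' : [/\ 0 <= pSEF * T_SEF R H H', 0 <= pDEM * T_DEM R H H',
   0 <= pCP * T_CP p H H' & 0 <= pCS * T_CS p H H'].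
Proof.
split; apply: mulr_ge0; first [exact: ltW | exact: T_SEF_ge0 | exact: T_DEM_ge0
  | exact: T_CP_ge0 | exact: T_CS_ge0].
Qed.

Lemma T_ge0 H H' : 0 <= T H H'.
Proof.
have [h1 h2 h3 h4] := T_terms H H'; rewrite /T_u.
by rewrite !addr_ge0.
Qed.

Lemma T_sym H H' : H \in S -> H' \in S -> T H H' = T H' H.
Proof.
move=> h1 h2; rewrite /T_u (T_SEF_sym R hlE h1 h2) (T_DEM_sym R hlE h1 h2).
by rewrite (T_CP_sym p h1 h2) (T_CS_sym p h1 h2).
Qed.

Lemma T_pos_SEF H H' : 0 < T_SEF R H H' -> 0 < T H H'.
Proof.
move=> h; have [h1 h2 h3 h4] := T_terms H H'; rewrite /T_u.
have h5 : 0 < pSEF * T_SEF R H H' by apply: mulr_gt0.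
move: h1 h2 h3 h4 h5; set a := pSEF * _; set b := pDEM * _; set c := pCP * _; set d := pCS * _.
move=> *; lra.
Qed.

Lemma T_pos_DEM H H' : 0 < T_DEM R H H' -> 0 < T H H'.
Proof.
move=> h; have [h1 h2 h3 h4] := T_terms H H'; rewrite /T_u.
have h5 : 0 < pDEM * T_DEM R H H' by apply: mulr_gt0.
move: h1 h2 h3 h4 h5; set a := pSEF * _; set b := pDEM * _; set c := pCP * _; set d := pCS * _.
move=> *; lra.
Qed.

Lemma T_pos_CP H H' : 0 < T_CP p H H' -> 0 < T H H'.
Proof.
move=> h; have [h1 h2 h3 h4] := T_terms H H'; rewrite /T_u.
have h5 : 0 < pCP * T_CP p H H' by apply: mulr_gt0.
move: h1 h2 h3 h4 h5; set a := pSEF * _; set b := pDEM * _; set c := pCP * _; set d := pCS * _.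
move=> *; lra.
Qed.

Lemma T_SEF_pos H e : e \in single_edges H -> 0 < T_SEF R H (SEF e H).
Proof.
move=> he; rewrite /T_SEF.
have -> : (single_edges H == set0) = false by apply/negP => /eqP h; rewrite h inE in he.
apply: divr_gt0; rewrite ltr0n; apply/card_gt0P; last by exists e.
by exists e; rewrite inE he eqxx.
Qed.

Lemma T_DEM_pos H e f : e \in single_edges H -> f \in double_edges H ->
  0 < T_DEM R H (DEM e f H).
Proof.
move=> he hf; rewrite /T_DEM.
have -> : (single_edges H == set0) = false by apply/negP => /eqP h; rewrite h inE in he.
have -> : (double_edges H == set0) = false by apply/negP => /eqP h; rewrite h inE in hf.
apply: divr_gt0; rewrite ltr0n ?muln_gt0; last by apply/andP; split; apply/card_gt0P; [exists e|exists f].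
by apply/card_gt0P; exists (e, f); rewrite inE in_setX he hf eqxx.
Qed.

Lemma step H H' : H \in S -> H' \in S -> H != H' ->
  exists H1, [/\ H1 \in S, 0 < T H H1 & (#|H1 :\: H'| < #|H :\: H'|)%N].
Proof.
move=> h1 h2 hne.
have := h1; rewrite inS => /and3P [hl /eqP hpr1 /eqP hc1].
have := h2; rewrite inS => /and3P [hl' /eqP hpr2 /eqP hc2].
have hpr : pr H = pr H' by rewrite hpr1 hpr2.
have hc : #|H| = #|H'| by rewrite hc1 hc2.
have : ~~ (H \subset H').
  by apply: contra hne => hs; rewrite eqEcard hs hc leqnn.
case/subsetPn => a ha haH.
have hra : erev a \in H'.
  by have := pr_mem hpr ha; rewrite (negbTE haH).
case hraH: (erev a \in H).
- have : ~~ (H' \subset H).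
    by apply: contra hne => hs; rewrite eq_sym eqEcard hs hc leqnn.
  case/subsetPn => b hb hbH.
  have hrb : erev b \in H by have := pr_mem (esym hpr) hb; rewrite (negbTE hbH).
  have hs : erev b \in single_edges H by rewrite in_singles hrb erevK hbH.
  have hd : a \in double_edges H by rewrite in_doubles ha hraH.
  exists (DEM (erev b) a H); split.
  + exact: DEM_inS.
  + by apply: T_pos_DEM; apply: T_DEM_pos.
  + by rewrite /DEM -/(erev (erev b)) erevK; apply: card_dec.
- have hs : a \in single_edges H by rewrite in_singles ha hraH.
  exists (SEF a H); split.
  + exact: SEF_inS.
  + by apply: T_pos_SEF; apply: T_SEF_pos.
  + by rewrite /SEF; apply: card_dec.
Qed.

Lemma mpow_ge0 n x y : 0 <= mpow S T n x y.
Proof.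
elim: n y => [|n IH] y /=; first exact: ler0n.
by apply: sumr_ge0 => z _; apply: mulr_ge0 => //; apply: T_ge0.
Qed.

Lemma mpow_step n x z y : 0 < mpow S T n x z -> z \in S -> 0 < T z y ->
  0 < mpow S T n.+1 x y.
Proof.
move=> h hz hT /=; apply: (@sum_pos R _ _ _ z) => //.
  by move=> w _; apply: mulr_ge0; [apply: mpow_ge0 | apply: T_ge0].
exact: mulr_gt0.
Qed.

Lemma irred : irreducible S T.
Proof.
move=> x y hx.
move: {2}#|y :\: x| (leqnn #|y :\: x|) => k.
elim: k y => [|k IH] y hk hy.
  have hyx : y = x.
    apply/eqP; rewrite eqEcard.
    have hsub : y \subset x.
      by apply/subsetP => z hz; apply/negPn/negP => hzx; move: hk; rewrite leqn0 cards_eq0 => /eqP /setP /(_ z); rewrite !inE hz hzx.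
    have := hx; rewrite inS => /and3P [_ _ /eqP ->].
    have := hy; rewrite inS => /and3P [_ _ /eqP ->].
    by rewrite hsub leqnn.
  by exists 0%N; rewrite hyx /= eqxx ltr01.
case: (y =P x) => [->|hne]; first by exists 0%N; rewrite /= eqxx ltr01.
have [y1 [hy1 hT hlt]] := step hy hx (introN eqP hne).
have [n hn] := IH y1 (leq_trans hlt hk) hy1.
exists n.+1; apply: (mpow_step hn hy1).
by rewrite T_sym.
Qed.

Hypothesis hsum1 : pSEF + pDEM + pCP + pCS = 1.
Hypothesis hpz : forall d, ~~ is_max_clique_size E d -> p d = 0.
Hypothesis hpsum : \sum_(d < #|V|.+1 | is_max_clique_size E d) p d = 1.

Lemma pd_sum H : H \in S ->
  \sum_(d < #|V|.+1) p d * (max_cliques_of_size H d != set0)%:R = 1.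
Proof.
move=> hS; rewrite -[RHS]hpsum [RHS]big_mkcond; apply: eq_bigr => d _.
by rewrite (mcS d hS) /is_max_clique_size; case: (_ != set0); rewrite ?mulr1 ?mulr0.
Qed.

Lemma T_row H : H \in S -> \sum_(H' in S) T H H' = 1.
Proof.
move=> hS; rewrite /T_u !big_split /= -!mulr_sumr.
by rewrite T_SEF_row // T_DEM_row // T_CP_row // T_CS_row // pd_sum // !mulr1.
Qed.

Lemma T_self H : H \in S -> 0 < T H H.
Proof.
move=> hS.
have [d hd] : exists d : 'I_#|V|.+1, is_max_clique_size E d && (0 < p d).
  case: (boolP [exists d : 'I_#|V|.+1, is_max_clique_size E d && (0 < p d)]) => [/existsP //|/existsPn hn].
  exfalso; move: hpsum; rewrite big1; first by move/eqP; rewrite eq_sym oner_eq0.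
  move=> d hd; have := hn d; rewrite hd /= => hnp.
  by apply/eqP; rewrite eq_le hp0 andbT leNgt.
apply: T_pos_CP; apply: (T_CP_self hp0 hS); exists d.
by case/andP: hd => h1 h2; split => //; rewrite (mcS d hS).
Qed.

Lemma aper : aperiodic S T.
Proof.
move=> x hx d hd.
have h1 : mpow S T 1 x x = T x x.
  rewrite /= (bigD1 x) //= eqxx mul1r big1 ?addr0 // => z /andP [_ hz].
  by rewrite eq_sym (negbTE hz) mul0r.
by apply/eqP; rewrite -dvdn1; apply: hd => //; rewrite h1 T_self.
Qed.

Lemma stat : stationary S T (uniform_on R S).
Proof.
move=> y hy; rewrite /uniform_on -mulr_sumr.
under eq_bigr => x hx do rewrite (T_sym hx hy).
by rewrite T_row // mulr1.
Qed.

End Main.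

Unset Implicit Arguments.

Theorem corollary3p11 (R : realFieldType) (V : finType) (E : {set V * V})
  (pSEF pDEM pCP pCS : R) (p : nat -> R) :
  loopless E ->
  double_edges E != set0 ->
  0 < pSEF -> 0 < pDEM -> 0 < pCP -> 0 < pCS ->
  pSEF + pDEM + pCP + pCS = 1 ->
  (forall d, 0 <= p d) ->
  (forall d, ~~ is_max_clique_size E d -> p d = 0) ->
  \sum_(d < #|V|.+1 | is_max_clique_size E d) p d = 1 ->
  let S := state_space E in
  let T := T_u pSEF pDEM pCP pCS p in
  E \in S /\ ergodic S T /\ stationary S T (uniform_on R S).
Proof.
move=> hlE _ hSEF hDEM hCP hCS hsum hp0 hpz hpsum S T.
split; first by rewrite inS hlE !eqxx.
split; last exact: stat.
split; first exact: irred.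
exact: aper.
Qed.
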